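(* Let $G$ be a finite abelian group and $\{a,b\}$ a $2$-element generating set of $G$ with $a$ and $b$ nontrivial. If the subgroup $\langle a-b\rangle$ has even index in $G$, then $\mathrm{Cay}(G;a,b)$ has two arc-disjoint hamiltonian paths.
   Context: For an abelian group $G$ and $a,b\in G$, the Cayley digraph $\mathrm{Cay}(G;a,b)$ has vertex set $G$ and an arc from $v$ to $v+s$ for every $v\in G$ and $s\in\{a,b\}$. A hamiltonian path is a directed path visiting every vertex exactly once; arc-disjoint means sharing no arc. *)

(* Defs.v *)
From HB Require Import structures.
From mathcomp Require Import all_boot all_order all_algebra all_fingroup.
Set Implicit Arguments. Unset Strict Implicit. Unset Printing Implicit Defensive.
Import GRing.Theory.
Local Open Scope ring_scope.

(* A finite abelian group is a finZmodType G (written additively). *)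

Definition cay_arc (G : finZmodType) (a b : G) (v w : G) : bool :=
  (w == v + a) || (w == v + b).

Definition arcs (G : finZmodType) (p : seq G) : seq (G * G) :=
  zip p (behead p).

Definition ham_path (G : finZmodType) (a b : G) (p : seq G) : Prop :=
  [/\ uniq p, size p = #|G| & all (fun e => cay_arc a b e.1 e.2) (arcs p)].

Definition arc_disjoint (G : finZmodType) (p q : seq G) : Prop :=
  forall e, e \in arcs p -> e \notin arcs q.

(* Main.v *)
Require Import Defs.
From HB Require Import structures.
From mathcomp Require Import all_boot all_order all_algebra all_fingroup.
From mathcomp Require Import cyclic zify.
Set Implicit Arguments. Unset Strict Implicit. Unset Printing Implicit Defensive.
Import GRing.Theory.

Lemma coprime_gcd_div (P n : nat) : 0 < n ->
  coprime (P %/ gcdn P n) (n %/ gcdn P n).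
Proof.
move=> n0.
have g0 : 0 < gcdn P n by rewrite gcdn_gt0 n0 orbT.
rewrite /coprime.
have := muln_gcdl (P %/ gcdn P n) (n %/ gcdn P n) (gcdn P n).
rewrite !divnK ?dvdn_gcdl ?dvdn_gcdr //.
move=> h; apply/eqP.
apply/eqP; rewrite -(eqn_pmul2r g0) mul1n; apply/eqP; by rewrite h.
Qed.

Lemma mod_cancel_coprime (c n t t' : nat) : coprime c n -> t < n -> t' < n ->
  t * c = t' * c %[mod n] -> t = t'.
Proof.
move=> co.
wlog le : t t' / t' <= t.
  move=> H ht ht' E; case: (leqP t' t) => h; first exact: H.
  by apply/esym/H => //; apply: ltnW.
move=> ht ht' /eqP E.
rewrite eqn_mod_dvd ?leq_mul2r ?le ?orbT // -mulnBl in E.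
rewrite Gauss_dvdl // in E; last by rewrite coprime_sym.
case: (posnP (t - t')) => [z|p].
  by apply/eqP; rewrite eqn_leq le andbT -subn_eq0 z.
have := dvdn_leq p E.
by rewrite leqNgt (leq_ltn_trans (leq_subr _ _) ht).
Qed.

Lemma core (P n t t' s s' : nat) : 0 < n ->
  t < n %/ gcdn P n -> t' < n %/ gcdn P n -> s < gcdn P n -> s' < gcdn P n ->
  t * P + s = t' * P + s' %[mod n] -> t = t' /\ s = s'.
Proof.
move=> n0 ht ht' hs hs' E.
set g := gcdn P n in ht ht' hs hs' E.
have g0 : 0 < g by rewrite gcdn_gt0 n0 orbT.
have gP : g %| P := dvdn_gcdl P n.
have gn : g %| n := dvdn_gcdr P n.
have ss : s = s'.
  have E2 : t * P + s = t' * P + s' %[mod g].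
    by rewrite -(modn_dvdm _ gn) E (modn_dvdm _ gn).
  move: E2; rewrite -(divnK gP) !mulnA !modnMDl !modn_small //.
split => //.
move: E; rewrite ss => /eqP; rewrite eqn_modDr => /eqP E.
apply: (@mod_cancel_coprime (P %/ g) (n %/ g)) => //.
  exact: coprime_gcd_div.
apply/eqP; rewrite -(eqn_pmul2r g0) !muln_modl -!mulnA !divnK //.
by apply/eqP.
Qed.

Lemma redP (P n q : nat) : 0 < n ->
  q * P = (q %% (n %/ gcdn P n)) * P %[mod n].
Proof.
move=> n0.
set g := gcdn P n.
have g0 : 0 < g by rewrite gcdn_gt0 n0 orbT.
have gP : g %| P := dvdn_gcdl P n.
have gn : g %| n := dvdn_gcdr P n.
rewrite {1}(divn_eq q (n %/ g)) mulnDl.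
set n' := n %/ g.
have -> : q %/ n' * n' * P = (q %/ n' * (P %/ g)) * n.
  have hP : P = P %/ g * g by rewrite divnK.
  have hn : n = n' * g by rewrite divnK.
  rewrite [in LHS]hP [in RHS]hn -!mulnA; congr (_ * _).
  by rewrite mulnCA.
by rewrite modnMDl.
Qed.

Lemma modD_cong (x y z n : nat) : x = y %[mod n] -> x + z = y + z %[mod n].
Proof. by move=> h; rewrite -modnDml h modnDml. Qed.

Lemma modD_cancel (x y z n : nat) : x + z = y + z %[mod n] -> x = y %[mod n].
Proof. by move/eqP; rewrite eqn_modDr => /eqP. Qed.

Lemma s_lt (P n q : nat) : 0 < n -> q < n -> q %/ (n %/ gcdn P n) < gcdn P n.
Proof.
move=> n0 qn.
have g0 : 0 < gcdn P n by rewrite gcdn_gt0 n0 orbT.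
have n'0 : 0 < n %/ gcdn P n by rewrite divn_gt0 // dvdn_leq // dvdn_gcdr.
by rewrite ltn_divLR // mulnC divnK // dvdn_gcdr.
Qed.

Lemma t_lt (P n q : nat) : 0 < n -> q %% (n %/ gcdn P n) < n %/ gcdn P n.
Proof.
move=> n0.
have g0 : 0 < gcdn P n by rewrite gcdn_gt0 n0 orbT.
have n'0 : 0 < n %/ gcdn P n by rewrite divn_gt0 // dvdn_leq // dvdn_gcdr.
by rewrite ltn_pmod.
Qed.

Definition X1 (k W n q r : nat) :=
  q * k + (q * W.+1 - q %/ (n %/ gcdn (k + W.+1) n) + minn r W).
Definition X2 (k W n q r : nat) :=
  q * k + (q * W.+1 + q %/ (n %/ gcdn (k + W.+1) n) + (r - W)) + (n - gcdn (k + W.+1) n).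

Lemma s_le (P n q : nat) : 0 < n -> q %/ (n %/ gcdn P n) <= q.
Proof. by move=> n0; rewrite leq_div. Qed.

Lemma X1E (k W n q r : nat) : 0 < n ->
  X1 k W n q r = q * (k + W.+1) - q %/ (n %/ gcdn (k + W.+1) n) + minn r W.
Proof.
move=> n0; rewrite /X1.
have := s_le (k + W.+1) q n0.
set s := q %/ _ => hs.
have : q <= q * W.+1 by rewrite leq_pmulr.
rewrite mulnDr; lia.
Qed.

Lemma arith1 (x s s' : nat) : s <= x -> x - s + (s + s') = x + s'.
Proof. lia. Qed.

Lemma inj1 (k W n q q' r : nat) : 0 < n -> q < n -> q' < n ->
  X1 k W n q r = X1 k W n q' r %[mod n] -> q = q'.
Proof.
move=> n0 qn qn'; rewrite !X1E //.
set P := k + W.+1.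
move=> /modD_cancel.
have := s_le P q n0; have := s_le P q' n0.
have := s_lt P n0 qn; have := s_lt P n0 qn'.
have := t_lt P q n0; have := t_lt P q' n0.
set n' := n %/ gcdn P n.
set s := q %/ n'; set s' := q' %/ n'.
move=> ht' ht hs' hs les' les E.
have E2 : q * P + s' = q' * P + s %[mod n].
  have := modD_cong (s + s') E.
  rewrite arith1; last by apply: leq_trans les (leq_pmulr _ _); rewrite /P addnS.
  by rewrite [s + s']addnC arith1 //; apply: leq_trans les' (leq_pmulr _ _); rewrite /P addnS.
have E3 : (q %% n') * P + s' = (q' %% n') * P + s %[mod n].
  by rewrite -modnDml -redP // modnDml E2 -modnDml redP // modnDml.
have [tt ss] := core n0 ht ht' hs' hs E3.
by rewrite (divn_eq q n') (divn_eq q' n') tt -/s -/s' ss.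
Qed.

Lemma X2E (k W n q r : nat) :
  X2 k W n q r = q * (k + W.+1) + q %/ (n %/ gcdn (k + W.+1) n) + ((r - W) + (n - gcdn (k + W.+1) n)).
Proof. by rewrite /X2 mulnDr !addnA. Qed.

Lemma inj2 (k W n q q' r : nat) : 0 < n -> q < n -> q' < n ->
  X2 k W n q r = X2 k W n q' r %[mod n] -> q = q'.
Proof.
move=> n0 qn qn'; rewrite !X2E //.
set P := k + W.+1.
move=> /modD_cancel.
have := s_lt P n0 qn; have := s_lt P n0 qn'.
have := t_lt P q n0; have := t_lt P q' n0.
set n' := n %/ gcdn P n.
set s := q %/ n'; set s' := q' %/ n'.
move=> ht' ht hs' hs E.
have E3 : (q %% n') * P + s = (q' %% n') * P + s' %[mod n].
  by rewrite -modnDml -redP // modnDml E -modnDml redP // modnDml.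
have [tt ss] := core n0 ht ht' hs hs' E3.
by rewrite (divn_eq q n') (divn_eq q' n') tt -/s -/s' ss.
Qed.

Lemma arith2 (y s s' g n : nat) : s < g -> g <= n ->
  y + s' + 1 + (n - g) + (s + (g.-1 - s)) = y + s' + n.
Proof. lia. Qed.

Lemma arith3 (x W s W' : nat) : W' = W -> x - s + W = x - s + W'.
Proof. lia. Qed.

Lemma arith4 (y W c : nat) : y + (1 + W + c) = y + 1 + c + W.
Proof. lia. Qed.

Lemma cross (k W n q q' : nat) : 0 < n -> q < n -> q' < n ->
  X1 k W n q W.*2.+1 = X2 k W n q' W.*2.+1 %[mod n] ->
  q %% (n %/ gcdn (k + W.+1) n) = q' %% (n %/ gcdn (k + W.+1) n).
Proof.
move=> n0 qn qn'; rewrite X1E // X2E.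
have -> : minn W.*2.+1 W = W by apply/minn_idPr; rewrite -addnn -addSn leq_addl.
have -> : W.*2.+1 - W = 1 + W by rewrite -addnn -addSn addnK add1n.
set P := k + W.+1.
have g0 : 0 < gcdn P n by rewrite gcdn_gt0 n0 orbT.
have gn : gcdn P n <= n by rewrite dvdn_leq // dvdn_gcdr.
have := s_le P q n0.
have := s_lt P n0 qn; have := s_lt P n0 qn'.
have := t_lt P q n0; have := t_lt P q' n0.
set n' := n %/ gcdn P n.
set g := gcdn P n in g0 gn *.
set s := q %/ n'; set s' := q' %/ n'.
move=> ht' ht hs' hs les.
have -> : q' * P + s' + (1 + W + (n - g)) = (q' * P + s' + 1 + (n - g)) + W.
  by rewrite arith4.
move=> /modD_cancel /(modD_cong (s + (g.-1 - s))).
rewrite arith1; last by apply: leq_trans les (leq_pmulr _ _); rewrite /P addnS.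
rewrite arith2 // modnDr => E.
have E3 : (q %% n') * P + (g.-1 - s) = (q' %% n') * P + s' %[mod n].
  by rewrite -modnDml -redP // modnDml E -modnDml redP // modnDml.
have hg1 : g.-1 - s < g by rewrite (leq_ltn_trans (leq_subr _ _)) // prednK // ltnSn.
by have [tt _] := core n0 ht ht' hg1 hs' E3.
Qed.

Lemma S1 (m t : nat) : (t %% m).+1 < m -> t.+1 %/ m = t %/ m /\ t.+1 %% m = (t %% m).+1.
Proof.
move=> h.
have m0 : 0 < m by apply: leq_ltn_trans h.
have e : t.+1 = t %/ m * m + (t %% m).+1 by rewrite {1}(divn_eq t m) addnS.
by rewrite e divnMDl // (divn_small h) addn0 modnMDl (modn_small h).
Qed.

Lemma S2 (m t : nat) : 0 < m -> (t %% m).+1 = m -> t.+1 %/ m = (t %/ m).+1 /\ t.+1 %% m = 0.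
Proof.
move=> m0 h.
have e : t.+1 = (t %/ m).+1 * m by rewrite {1}(divn_eq t m) -addnS h mulSn addnC.
by rewrite e mulnK // modnMl.
Qed.

Definition B1 (W n' t : nat) :=
  let q := t %/ W.*2.+2 in let r := t %% W.*2.+2 in
  q * W.+1 - q %/ n' + minn r W.
Definition B2 (W n' t : nat) :=
  let q := t %/ W.*2.+2 in let r := t %% W.*2.+2 in
  q * W.+1 + q %/ n' + (r - W).
Definition d1 (W n' t : nat) : bool :=
  let q := t %/ W.*2.+2 in let r := t %% W.*2.+2 in
  if r < W then true else if r.+1 < W.*2.+2 then false else ~~ (n' %| q.+1).
Definition d2 (W n' t : nat) : bool :=
  let q := t %/ W.*2.+2 in let r := t %% W.*2.+2 in
  if r < W then false else if r.+1 < W.*2.+2 then true else (n' %| q.+1).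

Lemma aminn (r W : nat) : minn r.+1 W = minn r W + (r < W).
Proof. case: (ltnP r W) => h /=; lia. Qed.

Lemma asub (r W : nat) : W <= r -> r.+1 - W = r - W + 1.
Proof. lia. Qed.

Lemma aB1 (x s W : nat) (d : bool) : s <= x ->
  x + W.+1 - (s + d) + 0 = x - s + W + ~~ d.
Proof. case: d => /=; lia. Qed.

Lemma aB2 (x s W : nat) (d : bool) : 
  x + W.+1 + (s + d) + (0 - W) = x + s + (W.*2.+1 - W) + d.
Proof. case: d => /=; lia. Qed.

Lemma stepB1 (W n' t : nat) : 0 < n' -> B1 W n' t.+1 = B1 W n' t + d1 W n' t.
Proof.
move=> n0; rewrite /B1 /d1.
set m := W.*2.+2.
have m0 : 0 < m by [].
have hr : t %% m < m by rewrite ltn_pmod.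
case: (ltnP (t %% m).+1 m) => h.
  have [-> ->] := S1 h.
  by rewrite aminn; case: (_ < W); rewrite addnA.
have e : (t %% m).+1 = m by apply/eqP; rewrite eqn_leq h hr.
have [-> ->] := S2 m0 e.
have hW : (t %% m < W) = false.
  apply/negbTE; rewrite -leqNgt; move: e; rewrite /m; lia.
rewrite hW /= ?ltnn.
have -> : t %% m = W.*2.+1 by move: e; rewrite /m; lia.
have -> : minn W.*2.+1 W = W by apply/minn_idPr; rewrite -addnn -addSn leq_addl.
rewrite divnS // mulSn.
have : (t %/ m) %/ n' <= t %/ m * W.+1.
  by apply: leq_trans (leq_div _ _) (leq_pmulr _ _).
move: (n' %| (t %/ m).+1) ((t %/ m) %/ n') (t %/ m * W.+1) => d s x.
case: d => /=; clear; lia.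
Qed.

Lemma stepB2 (W n' t : nat) : 0 < n' -> B2 W n' t.+1 = B2 W n' t + d2 W n' t.
Proof.
move=> n0; rewrite /B2 /d2.
set m := W.*2.+2.
have m0 : 0 < m by [].
have hr : t %% m < m by rewrite ltn_pmod.
case: (ltnP (t %% m).+1 m) => h.
  have [-> ->] := S1 h.
  rewrite ?h.
  case: (ltnP (t %% m) W) => hW /=.
    have -> : (t %% m).+1 - W = 0 by move: hW; clear; lia.
    have -> : (t %% m) - W = 0 by move: hW; clear; lia.
    by rewrite !addn0.
  by rewrite asub // addnA.
have e : (t %% m).+1 = m by apply/eqP; rewrite eqn_leq h hr.
have [-> ->] := S2 m0 e.
have hW : (t %% m < W) = false.
  apply/negbTE; rewrite -leqNgt; move: e; rewrite /m; lia.
rewrite hW /= ?ltnn.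
have -> : t %% m = W.*2.+1 by move: e; rewrite /m; lia.
rewrite divnS // mulSn.
move: (n' %| (t %/ m).+1) ((t %/ m) %/ n') (t %/ m * W.+1) => d s x.
case: d => /=; clear; lia.
Qed.
Section Helpers.
Local Open Scope ring_scope.

Lemma idx_dvd (G : finZmodType) (a b : G) :
  <<[set a; b]>>%g = [set: G] ->
  forall r : nat, (a *+ r \in <[(a - b)%R]>%g) = (#|[set: G] : <[(a - b)%R]>|%g %| r)%N.
Proof.
move=> sG r.
set H := <[(a - b)%R]>%G.
have nH : [set: G] \subset 'N(H)%g := sub_abelian_norm (FinRing.zmod_abelian _) (subsetT _).
have aN : a \in 'N(H)%g by apply: (subsetP nH); rewrite inE.
have bN : b \in 'N(H)%g by apply: (subsetP nH); rewrite inE.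
set x := coset H a.
have Qx : ([set: G] / H)%g = <[x]>%g.
  apply/eqP; rewrite eqEsubset; apply/andP; split; last first.
    by rewrite cycle_subG mem_quotient ?inE.
  rewrite sub_morphim_pre //= -sG gen_subG; apply/subsetP => y.
  case/set2P => ->; apply: mem_morphpre => //=.
    exact: cycle_id.
  have bH : (b - a)%R \in H.
    have -> : (b - a = (a - b)^-1)%g by rewrite FinRing.zmodVgE opprB.
    by rewrite groupV cycle_id.
  suff -> : coset H b = x by exact: cycle_id.
  rewrite /x -(coset_kerl a bH); congr coset.
  by rewrite FinRing.zmodMgE subrK.
have ox : #[x]%g = #|[set: G] : H|%g by rewrite orderE -Qx card_quotient.
rewrite -ox order_dvdn.
have -> : a *+ r = (a ^+ r)%g by [].
rewrite -morphX //=.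
apply/idP/idP => [/coset_id -> // | /eqP h].
apply: coset_idr => //.
by apply: (subsetP nH); rewrite inE.
Qed.

Lemma eH (G : finZmodType) (a b : G) (X : nat) : (b - a) *+ X \in <[(a - b)%R]>%g.
Proof.
have -> : (b - a) *+ X = (((a - b)^-1)%g ^+ X)%g.
  by rewrite FinRing.zmodXgE FinRing.zmodVgE opprB.
by rewrite groupX // groupV cycle_id.
Qed.

Lemma GL (G : finZmodType) (a b : G) :
  <<[set a; b]>>%g = [set: G] ->
  forall r r' X X' : nat, (r < #|[set: G] : <[(a - b)%R]>|%g)%N ->
  (r' < #|[set: G] : <[(a - b)%R]>|%g)%N ->
  a *+ r + (b - a) *+ X = a *+ r' + (b - a) *+ X' ->
  r = r' /\ X = X' %[mod #[(a - b)%R]%g].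
Proof.
move=> sG.
suff main : forall r r' X X' : nat, (r' <= r)%N -> (r < #|[set: G] : <[(a - b)%R]>|%g)%N ->
  a *+ r + (b - a) *+ X = a *+ r' + (b - a) *+ X' ->
  r = r' /\ X = X' %[mod #[(a - b)%R]%g].
  move=> r r' X X' hr hr' E.
  case: (leqP r' r) => h; first exact: main.
  have [h1 h2] := main r' r X' X (ltnW h) hr' (esym E).
  by split.
move=> r r' X X' le hr E.
have rr : r = r'.
  have : a *+ (r - r') \in <[(a - b)%R]>%g.
    have -> : a *+ (r - r') = ((b - a) *+ X' - (b - a) *+ X).
      apply: (addrI (a *+ r')).
      by rewrite -mulrnDr subnKC // addrA -E addrK.
    have -> : ((b - a) *+ X' - (b - a) *+ X) = ((b - a) *+ X' * ((b - a) *+ X)^-1)%g by [].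
    by rewrite groupM ?groupV ?eH.
  rewrite idx_dvd // => hd.
  case: (posnP (r - r')) => [z|p].
    by apply/eqP; rewrite eqn_leq le andbT -subn_eq0 z.
  have := dvdn_leq p hd.
  by rewrite leqNgt (leq_ltn_trans (leq_subr _ _) hr).
split => //.
move: E; rewrite rr => /addrI E.
apply/eqP.
have o : #[(a - b)%R]%g = #[(b - a)%R]%g.
  by rewrite -orderV FinRing.zmodVgE opprB.
rewrite o -eq_expg_mod_order.
by apply/eqP.
Qed.


Lemma arcs_map_iota (T : finZmodType) (f : nat -> T) (k N : nat) :
  arcs (map f (iota k N)) = map (fun i => (f i, f i.+1)) (iota k N.-1).
Proof.
elim: N k => [|N IH] k //=.
case: N IH => [|N] IH //=.
by rewrite /arcs /= in IH *; rewrite IH.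
Qed.

Lemma NF (G : finZmodType) (a e : G) (m k t : nat) : a *+ m = e *+ k ->
  a *+ t = a *+ (t %% m) + e *+ (t %/ m * k).
Proof.
move=> h.
rewrite {1}(divn_eq t m) mulrnDr addrC mulnC mulrnA h -mulrnA. by rewrite mulnC.
Qed.

Lemma step_arc (G : finZmodType) (a b : G) (t B : nat) (d : bool) :
  a *+ t.+1 + (b - a) *+ (B + d) = a *+ t + (b - a) *+ B + (if d then b else a).
Proof.
rewrite mulrSr mulrnDr; case: d => /=.
  by rewrite addrACA -addrA [a + _]addrC subrK addrA.
by rewrite (_ : (b - a) *+ 0 = 0) ?mulr0n // addr0 addrAC.
Qed.

Lemma bool_mul_inj (G : finZmodType) (x : G) (d1 d2 : bool) : x != 0 ->
  x *+ d1 = x *+ d2 -> d1 = d2.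
Proof.
move=> /negPf x0; case: d1; case: d2 => //= /esym/eqP; by rewrite ?x0 // eq_sym x0.
Qed.


End Helpers.

Lemma dvd_succ_mod (n' q q' : nat) : q %% n' = q' %% n' -> (n' %| q.+1) = (n' %| q'.+1).
Proof. by move=> h; rewrite /dvdn -[q.+1]addn1 -[q'.+1]addn1 -modnDml h modnDml. Qed.

Theorem mainTheorem5 (G : finZmodType) (a b : G) :
  a != b -> a != 0%R -> b != 0%R ->
  (<<[set a; b]>>%g = [set: G]) ->
  ~~ odd (#|[set: G] : <[(a - b)%R]>|)%g ->
  exists p q : seq G, [/\ ham_path a b p, ham_path a b q & arc_disjoint p q].
Proof.
move=> hab _ _ sG hodd.
have m0 : 0 < #|[set: G] : <[(a - b)%R]>|%g := indexg_gt0 _ _.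
have n0 : 0 < #[(a - b)%R]%g := order_gt0 _.
have card : #|G| = #|[set: G] : <[(a - b)%R]>|%g * #[(a - b)%R]%g.
  by rewrite -cardsT -(Lagrange (subsetT <[(a - b)%R]>%G)) mulnC.
have [k hk] : exists k, (a *+ #|[set: G] : <[(a - b)%R]>|%g)%R = ((b - a) *+ k)%R.
  have : (a *+ #|[set: G] : <[(a - b)%R]>|%g)%R \in <[(a - b)%R]>%g by rewrite idx_dvd // dvdnn.
  have -> : ((a - b)%R = ((b - a)%R)^-1)%g by rewrite FinRing.zmodVgE opprB.
  by rewrite cycleV => /cycleP [k hk]; exists k.
have GL' := GL sG.
move: hodd m0 card hk GL'.
set m := #|[set: G] : <[(a - b)%R]>|%g.
set n := #[(a - b)%R]%g.
move=> hodd m0 card hk GL'.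
pose W := m./2.-1.
have mW : m = W.*2.+2.
  have h := odd_double_half m; rewrite (negbTE hodd) add0n in h.
  have h2 : 0 < m./2 by move: m0; rewrite -{1}h double_gt0.
  by rewrite /W -doubleS prednK.
pose P := k + W.+1.
pose g := gcdn P n.
pose n' := n %/ g.
have g0 : 0 < g by rewrite gcdn_gt0 n0 orbT.
have n'0 : 0 < n' by rewrite divn_gt0 // dvdn_leq // dvdn_gcdr.
pose f1 t := ((a *+ t)%R + ((b - a) *+ B1 W n' t)%R)%R.
pose f2 t := ((a *+ t)%R + ((b - a) *+ (B2 W n' t + (n - g)))%R)%R.
have nf1 t : f1 t = ((a *+ (t %% m))%R + ((b - a) *+ X1 k W n (t %/ m) (t %% m))%R)%R.
  rewrite /f1 (NF t hk) -addrA -mulrnDr /X1 /B1 -mW; congr (_ + _)%R.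
have nf2 t : f2 t = ((a *+ (t %% m))%R + ((b - a) *+ X2 k W n (t %/ m) (t %% m))%R)%R.
  rewrite /f2 (NF t hk) -addrA -mulrnDr /X2 /B2 -mW !addnA; congr (_ + _)%R.
have qlt t : t < m * n -> t %/ m < n by move=> ht; rewrite ltn_divLR // mulnC.
have st1 t : f1 t.+1 = (f1 t + (if d1 W n' t then b else a))%R.
  by rewrite /f1 stepB1 // step_arc.
have st2 t : f2 t.+1 = (f2 t + (if d2 W n' t then b else a))%R.
  by rewrite /f2 stepB2 // addnAC step_arc.
have inj1' : {in iota 0 (m * n) &, injective f1}.
  move=> t t'; rewrite !mem_iota !add0n => ht ht' E.
  rewrite !nf1 in E.
  have [rr XX] := GL' _ _ _ _ (ltn_pmod t m0) (ltn_pmod t' m0) E.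
  rewrite rr in XX.
  have qq := inj1 n0 (qlt _ ht) (qlt _ ht') XX.
  by rewrite (divn_eq t m) (divn_eq t' m) qq rr.
have inj2' : {in iota 0 (m * n) &, injective f2}.
  move=> t t'; rewrite !mem_iota !add0n => ht ht' E.
  rewrite !nf2 in E.
  have [rr XX] := GL' _ _ _ _ (ltn_pmod t m0) (ltn_pmod t' m0) E.
  rewrite rr in XX.
  have qq := inj2 n0 (qlt _ ht) (qlt _ ht') XX.
  by rewrite (divn_eq t m) (divn_eq t' m) qq rr.
exists (map f1 (iota 0 (m * n))), (map f2 (iota 0 (m * n))).
split.
- split; first by rewrite map_inj_in_uniq ?iota_uniq.
    by rewrite size_map size_iota card.
  rewrite arcs_map_iota; apply/allP => x /mapP [i _ ->] /=.
  by rewrite /cay_arc st1; case: (d1 W n' i); rewrite eqxx ?orbT.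
- split; first by rewrite map_inj_in_uniq ?iota_uniq.
    by rewrite size_map size_iota card.
  rewrite arcs_map_iota; apply/allP => x /mapP [i _ ->] /=.
  by rewrite /cay_arc st2; case: (d2 W n' i); rewrite eqxx ?orbT.
move=> x; rewrite !arcs_map_iota => /mapP [t ht ->]; apply/negP => /mapP [t' ht' [E1 E2]].
move: ht ht'; rewrite !mem_iota !add0n => ht ht'.
have ht1 : t < m * n by apply: leq_trans ht (leq_pred _).
have ht1' : t' < m * n by apply: leq_trans ht' (leq_pred _).
have dd : d1 W n' t = d2 W n' t'.
  move: E2; rewrite st1 st2 E1 => /addrI.
  case: (d1 W n' t); case: (d2 W n' t') => // /eqP; by rewrite ?(negbTE hab) // eq_sym (negbTE hab).
move: E1; rewrite nf1 nf2 => E.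
have [rr XX] := GL' _ _ _ _ (ltn_pmod t m0) (ltn_pmod t' m0) E.
move: dd; rewrite /d1 /d2 -mW -rr.
case: (ltnP (t %% m) W) => // h1.
case: (ltnP (t %% m).+1 m) => // h2.
have hr : t %% m = W.*2.+1.
  have := ltn_pmod t m0; move: h2; rewrite mW; clear; lia.
rewrite -rr hr in XX.
have := cross n0 (qlt _ ht1) (qlt _ ht1') XX.
rewrite -/P -/g -/n' => /dvd_succ_mod ->.
by case: (n' %| _).
Qed.
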